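(* Assume that $I\subset J\hat{J}$. Then the natural reduction homomorphism $\pi_I:\Gamma(J,\hat{J})\to\overline{\Gamma}_I(J,\hat{J})$ is surjective.
   Context: $F$ is a totally real number field with ring of integers $R$; $J,\hat J\subset F$ are fractional ideals with $J\hat J\subset R$, and $I\subset R$ is a non-zero ideal. $\Gamma(J,\hat J)$ is the group of matrices $\begin{pmatrix} a_{11} & a_{12}\\ a_{21} & a_{22}\end{pmatrix}\in\operatorname{SL}_2(F)$ with $a_{11},a_{22}\in R$, $a_{12}\in J$, $a_{21}\in\hat J$. $\overline{\Gamma}_I(J,\hat J)$ is the group of matrices $\begin{pmatrix} \bar a_{11} & \bar a_{12}\\ \bar a_{21} & \bar a_{22}\end{pmatrix}$ with $\bar a_{11},\bar a_{22}\in R/I$, $\bar a_{12}\in J/IJ$, $\bar a_{21}\in\hat J/I\hat J$ and $\bar a_{11}\bar a_{22}-\bar a_{12}\bar a_{21}=1$ (using the map $J/IJ\otimes\hat J/I\hat J\to R/I$ induced by multiplication). *)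

(* Defs.v *)
From HB Require Import structures.
From mathcomp Require Import all_boot all_order all_algebra all_field.
Set Implicit Arguments. Unset Strict Implicit. Unset Printing Implicit Defensive.
Import Order.TTheory GRing.Theory Num.Theory.
Local Open Scope ring_scope.

Section NumberField.
Variable F : fieldExtType rat.

Definition totally_real : Prop :=
  forall (s : {rmorphism F -> algC}) (x : F), s x \is Num.real.

Definition intF (x : F) : Prop := integralOver (fun z : int => z%:~R : F) x.

Definition Rsubmodule (J : F -> Prop) : Prop :=
  [/\ J 0, (forall x y, J x -> J y -> J (x + y)) &
      (forall r x, intF r -> J x -> J (r * x))].

Definition frac_ideal (J : F -> Prop) : Prop :=
  [/\ Rsubmodule J, (exists x, J x /\ x != 0) &
      (exists d, [/\ intF d, d != 0 & forall x, J x -> intF (d * x)])].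

Definition nz_ideal (I : F -> Prop) : Prop :=
  frac_ideal I /\ (forall x, I x -> intF x).

Definition prod_ideal (I J : F -> Prop) (x : F) : Prop :=
  exists s : seq (F * F),
    (forall p, p \in s -> I p.1 /\ J p.2) /\ x = \sum_(p <- s) p.1 * p.2.

Definition subset_ideal (I J : F -> Prop) : Prop := forall x, I x -> J x.

Definition Gamma (J Jh : F -> Prop) (A : 'M[F]_2) : Prop :=
  [/\ \det A = 1, intF (A 0 0), intF (A 1 1), J (A 0 1) & Jh (A 1 0)].

(* Elements of Gammabar_I(J, Jh) are represented by lifts B: matrices with
   b11, b22 in R, b12 in J, b21 in Jh, such that b11 b22 - b12 b21 = 1 in R/I. *)
Definition Gammabar_lift (I J Jh : F -> Prop) (B : 'M[F]_2) : Prop :=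
  [/\ intF (B 0 0), intF (B 1 1), J (B 0 1), Jh (B 1 0) &
      I (B 0 0 * B 1 1 - B 0 1 * B 1 0 - 1)].

(* pi_I(A) equals the class of the lift B: entrywise congruences modulo
   I, IJ, I Jh, I. *)
Definition reduces_to (I J Jh : F -> Prop) (A B : 'M[F]_2) : Prop :=
  [/\ I (A 0 0 - B 0 0), I (A 1 1 - B 1 1),
      prod_ideal I J (A 0 1 - B 0 1) & prod_ideal I Jh (A 1 0 - B 1 0)].

End NumberField.

(* Main.v *)
Require Import Defs.
From HB Require Import structures.
From mathcomp Require Import all_boot all_order all_algebra all_field.
From mathcomp Require Import ring zify.
Import GRing.Theory Num.Theory.
Local Open Scope ring_scope.
Section S.
Variable F : fieldExtType rat.
Definition iF : {rmorphism int -> F} := (intr : int -> F).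
Lemma intF_add (x y : F) : intF x -> intF y -> intF (x + y).
Proof. exact: (@integral_add _ _ iF). Qed.
Lemma intF_mul (x y : F) : intF x -> intF y -> intF (x * y).
Proof. exact: (@integral_mul _ _ iF). Qed.
Lemma intF_opp (x : F) : intF x -> intF (- x).
Proof. exact: (@integral_opp _ _ iF). Qed.
Lemma intF_sub (x y : F) : intF x -> intF y -> intF (x - y).
Proof. exact: (@integral_sub _ _ iF). Qed.
Lemma intF_int (z : int) : intF (z%:~R : F).
Proof. exact: (@integral_id _ _ iF). Qed.
Lemma intF_iF (z : int) : intF (iF z).
Proof. exact: (@integral_id _ _ iF). Qed.
Lemma intF1 : intF (1 : F). Proof. exact: (@integral1 _ _ iF). Qed.
Lemma intF0 : intF (0 : F). Proof. exact: (@integral0 _ _ iF). Qed.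
Lemma intF_nat (n : nat) : intF (n%:R : F). Proof. exact: (@integral_nat _ _ iF). Qed.
Lemma intF_exp (x : F) n : intF x -> intF (x ^+ n).
Proof. move=> hx; elim: n => [|n IH]; first by rewrite expr0; exact: intF1.
by rewrite exprS; exact: intF_mul. Qed.
Lemma intF_sum (I : Type) (r : seq I) (P : pred I) (G : I -> F) :
  (forall i, P i -> intF (G i)) -> intF (\sum_(i <- r | P i) G i).
Proof. move=> h; elim/big_ind: _ => //; [exact: intF0 | exact: intF_add]. Qed.
Lemma intF_horner (q : {poly int}) (x : F) : intF x -> intF (map_poly iF q).[x].
Proof.
move=> hx; rewrite horner_coef; apply: intF_sum => i _.
by rewrite coef_map; apply: intF_mul; [exact: intF_int | exact: intF_exp].
Qed.

Lemma det2 (A : 'M[F]_2) : \det A = A 0 0 * A 1 1 - A 0 1 * A 1 0.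
Proof. rewrite (expand_det_row _ 0) !big_ord_recl big_ord0 /cofactor !det_mx11.
rewrite /= !mxE /=.
have l1 : lift ord0 (ord0 : 'I_1) = (1 : 'I_2) by apply/val_inj.
have l2 : lift (1 : 'I_2) (ord0 : 'I_1) = (0 : 'I_2) by apply/val_inj.
rewrite l1 l2 /bump /=. rewrite !expr0 expr1; ring.
Qed.

Lemma NZint (m : F) : m != 0 -> intF m ->
  exists N : int, N != 0 /\ exists s, intF s /\ N%:~R = m * s.
Proof.
move=> m0 hm; case: (hm) => p mp rp.
have : p != 0 by exact: monic_neq0.
clear mp.
move: rp; move: {2}(size p) (leqnn (size p)) => n.
elim: n p => [|n IH] p.
  by rewrite size_poly_leq0 => /eqP ->; rewrite eqxx.
move=> szp rp p0.
have hp : p = (p`_0)%:P + drop_poly 1 p * 'X.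
  by rewrite -[in LHS](poly_take_drop 1 p) expr1; congr (_ + _); apply/polyP=> i; rewrite coef_take_poly coefC; case: i.
have ev : (map_poly iF p).[m] = iF p`_0 + (map_poly iF (drop_poly 1 p)).[m] * m.
  by rewrite [in LHS]hp rmorphD rmorphM /= map_polyC map_polyX hornerD hornerM hornerC hornerX.
move: rp; rewrite /root ev => /eqP e.
have [c0|c0] := eqVneq (p`_0) 0.
  move: e; rewrite c0 rmorph0 add0r => /eqP; rewrite mulf_eq0 (negPf m0) orbF => rd.
  apply: (IH (drop_poly 1 p)) => //.
    by rewrite size_drop_poly; lia.
  apply: contra p0 => /eqP d0; by rewrite hp d0 c0 mul0r addr0.
exists (p`_0); split => //; exists (- (map_poly iF (drop_poly 1 p)).[m]); split.
  exact/intF_opp/intF_horner.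
have -> : (p`_0)%:~R = iF p`_0 by [].
by rewrite -[iF _](subr0) -e; ring.
Qed.
End S.
Section P.
Variable F : fieldExtType rat.
Import Pdiv.Ring Pdiv.RingMonic.

Lemma pow_rep (a : F) (p : {poly int}) m : p \is monic -> root (map_poly (iF F) p) a ->
  a ^+ m = (map_poly (iF F) (rmodp 'X^m p)).[a].
Proof.
move=> mp rp.
rewrite -[in LHS](hornerXn a m) -(map_polyXn (iF F)) {1}(rdivp_eq mp 'X^m).
rewrite rmorphD rmorphM /= hornerD hornerM (eqP rp) mulr0 add0r //.
Qed.

Lemma pigeon (a : F) (n : nat) : intF a ->
  exists m1 m2, (m1 < m2)%N /\ exists z, intF z /\ a ^+ m1 - a ^+ m2 = (n.+1)%:R * z.
Proof.
move=> ha; case: (ha) => p mp rp.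
pose k := size p.
pose N : int := (n.+1)%:Z.
pose sig (m : nat) : {ffun 'I_k -> 'I_n.+1} :=
  [ffun i : 'I_k => inord (absz ((rmodp 'X^m p)`_i %% N)%Z)].
pose T := {ffun 'I_k -> 'I_n.+1}.
pose g (i : 'I_(#|T|.+1)) := sig i.
have : ~~ injectiveb g.
  apply/negP => /injectiveP ig; have := leq_card _ ig.
  by rewrite card_ord ltnn.
case/injectivePn => i0 [j0] ij gij.
have key : forall m1 m2, sig m1 = sig m2 -> exists z, intF z /\ a ^+ m1 - a ^+ m2 = (n.+1)%:R * z.
  move=> m1 m2 e.
  have p0 : p != 0 by exact: monic_neq0.
  have s1 : (size (rmodp 'X^m1 p) <= k)%N by apply: ltnW; rewrite ltn_rmodp.
  have s2 : (size (rmodp 'X^m2 p) <= k)%N by apply: ltnW; rewrite ltn_rmodp.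
  have hk (q : {poly int}) : (size q <= k)%N -> (map_poly (iF F) q).[a] = \sum_(i < k) iF F q`_i * a ^+ i.
    move=> sq; have szm : (size (map_poly (iF F) q) <= k)%N by apply: leq_trans (size_poly _ _) sq.
    by rewrite (horner_coef_wide _ szm); apply: eq_bigr => i _; rewrite coef_map.
  rewrite (pow_rep _ _ m1 mp rp) (pow_rep _ _ m2 mp rp).
  rewrite (hk _ s1) (hk _ s2) -sumrB.
  pose r1 := rmodp 'X^m1 p; pose r2 := rmodp 'X^m2 p.
  exists (\sum_(i < k) iF F ((r1`_i - r2`_i) %/ N)%Z * a ^+ i); split.
    apply: intF_sum => i _; apply: intF_mul; [exact: intF_iF | exact: intF_exp ha].
  rewrite mulr_sumr; apply: eq_bigr => i _.
  have := congr1 (fun f : {ffun 'I_k -> 'I_n.+1} => f i) e; rewrite !ffunE => /(congr1 val); rewrite /=.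
  have hN : (0 < N)%R by [].
  have b1 := ltz_pmod (r1`_i) hN; have b1' := modz_ge0 (r1`_i) (lt0r_neq0 hN).
  have b2 := ltz_pmod (r2`_i) hN; have b2' := modz_ge0 (r2`_i) (lt0r_neq0 hN).
  rewrite !inordK; [| lia | lia] => eab.
  have em : (r1`_i = r2`_i %[mod N])%Z by lia.
  have /divzK dk : (N %| r1`_i - r2`_i)%Z by rewrite -eqz_mod_dvd; apply/eqP.
  rewrite -mulrBl -!rmorphB /= -[in LHS]dk rmorphM /=.
  have -> : (N%:~R : F) = n.+1%:R by [].
  by rewrite mulrA [_ * n.+1%:R]mulrC.
have [lt|lt|eq] := ltngtP i0 j0.
- by exists i0, j0; split => //; exact: key.
- have [z [hz ez]] := key _ _ gij; exists j0, i0; split => //; exists (-z); split.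
    exact: intF_opp.
  by rewrite mulrN -ez opprB.
- by move: ij; rewrite -val_eqE /= eq eqxx.
Qed.

Lemma Pow (a : F) (n : nat) : intF a ->
  exists K, (0 < K)%N /\ exists z, intF z /\ a ^+ K - a ^+ (K + K) = (n.+1)%:R * z.
Proof.
move=> ha; have [m1 [m2 [lt [z [hz ez]]]]] := pigeon a n ha.
pose p := (m2 - m1)%N.
have hp : (m1 + p = m2)%N by rewrite /p; lia.
have hp0 : (0 < p)%N by rewrite /p; lia.
clearbody p.
have per : forall q, exists w, intF w /\ a ^+ m1 - a ^+ (m1 + q * p) = n.+1%:R * w.
  elim=> [|q [w [hw ew]]].
    by exists 0; split; [exact: intF0 | rewrite mul0n addn0 subrr mulr0].
  exists (w + a ^+ (q * p) * z); split.
    by apply: intF_add => //; apply: intF_mul => //; exact: intF_exp.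
  have e2 : a ^+ (m1 + q.+1 * p) = a ^+ (q * p) * a ^+ m2.
    by rewrite -exprD; congr (_ ^+ _); rewrite mulSn; lia.
  rewrite e2 mulrDr -ew mulrCA -ez exprD; ring.
have [w [hw ew]] := per m1.+1.
exists (m1.+1 * p)%N; split; first by rewrite muln_gt0.
exists (a ^+ (m1.+1 * p - m1) * w); split.
  by apply: intF_mul => //; exact: intF_exp.
have -> : a ^+ (m1.+1 * p) - a ^+ (m1.+1 * p + m1.+1 * p) =
   a ^+ (m1.+1 * p - m1) * (a ^+ m1 - a ^+ (m1 + m1.+1 * p)).
  have hle : (m1 <= m1.+1 * p)%N by rewrite mulSn; exact: leq_trans (leq_pmulr m1 hp0) (leq_addl _ _).
  by rewrite mulrBr -!exprD; congr (_ ^+ _ - _ ^+ _); lia.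
by rewrite ew mulrCA.
Qed.
End P.

Section M.
Variable F : fieldExtType rat.

Lemma key_id (a d b c P Q W E hD : F) : E = a * P -> E - E ^+ 2 = b * hD ->
  (1 + a * (1 - d)) * W = 1 - E * Q ->
  (a - (a*d - b*c - 1) * (1 - E)) * (P * E + (1 - E) * W)
   - b * (hD * (-1 - (a*d - b*c - 1) * P - Q + W * (a*d - b*c - 1)) + c * ((1 - E) * W)) = 1.
Proof.
move=> eE hE hW.
apply/eqP; rewrite -subr_eq0; apply/eqP.
have -> : (a - (a*d - b*c - 1) * (1 - E)) * (P * E + (1 - E) * W)
   - b * (hD * (-1 - (a*d - b*c - 1) * P - Q + W * (a*d - b*c - 1)) + c * ((1 - E) * W)) - 1
  = (E - E ^+ 2 - b * hD) * (-1 - (a*d - b*c - 1) * P - Q + W * (a*d - b*c - 1))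
    + (1 - E) * ((1 + a * (1 - d)) * W - (1 - E * Q)).
  rewrite eE; ring.
by rewrite hE hW !subrr mul0r mulr0 addr0.
Qed.

Lemma sm_opp (J : F -> Prop) x : Rsubmodule J -> J x -> J (- x).
Proof. case=> _ _ hm hx; rewrite -mulN1r; apply: hm hx; exact/intF_opp/intF1. Qed.
Lemma sm_add (J : F -> Prop) x y : Rsubmodule J -> J x -> J y -> J (x + y).
Proof. by case=> _ ha _; apply: ha. Qed.
Lemma sm_sub (J : F -> Prop) x y : Rsubmodule J -> J x -> J y -> J (x - y).
Proof. by move=> h hx hy; apply: sm_add => //; exact: sm_opp. Qed.
Lemma sm_mul (J : F -> Prop) r x : Rsubmodule J -> intF r -> J x -> J (r * x).
Proof. by case=> _ _ hm; apply: hm. Qed.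
Lemma sm_mulr (J : F -> Prop) r x : Rsubmodule J -> intF r -> J x -> J (x * r).
Proof. by move=> h hr hx; rewrite mulrC; exact: sm_mul. Qed.
Lemma prod_single (I J : F -> Prop) x y : I x -> J y -> prod_ideal I J (x * y).
Proof.
move=> hx hy; exists [:: (x, y)]; split; last by rewrite big_seq1.
by move=> q; rewrite inE => /eqP ->.
Qed.
Lemma prod_zero (I J : F -> Prop) : prod_ideal I J 0.
Proof. by exists [::]; rewrite big_nil. Qed.

End M.

Theorem lemma7p4 (F : fieldExtType rat) (J Jh I : F -> Prop) :
  totally_real F ->
  frac_ideal J -> frac_ideal Jh ->
  subset_ideal (prod_ideal J Jh) (@intF F) ->
  nz_ideal I ->
  subset_ideal I (prod_ideal J Jh) ->
  forall B : 'M[F]_2, Gammabar_lift I J Jh B ->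
  exists A : 'M[F]_2, Gamma J Jh A /\ reduces_to I J Jh A B.
Proof.
move=> _ [smJ [j0 [hj0 j0nz]] _] [smJh [h0 [hh0 h0nz]] _] hJJ [[smI [i0 [hi0 i0nz]] _] IR] _.
move=> B [ha hd hb hc hg].
set a := B 0 0 in ha hg *; set d := B 1 1 in hd hg *; set b := B 0 1 in hb hg *;
  set c := B 1 0 in hc hg *.
have JJ x y : J x -> Jh y -> intF (x * y) by move=> hx hy; apply: hJJ; exact: prod_single.
have [b1 [hb1 [b1nz [hb1b hg1]]]] : exists b1, J b1 /\ b1 != 0 /\ prod_ideal I J (b1 - b)
    /\ I (a * d - b1 * c - 1).
  case: (eqVneq b 0) => [b0|bnz].
  - exists (i0 * j0); split; first by apply: sm_mul => //; exact: IR.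
    split; first by rewrite mulf_neq0.
    split; first by rewrite b0 subr0; exact: prod_single.
    have -> : a * d - i0 * j0 * c - 1 = (a * d - b * c - 1) - (j0 * c) * i0.
      by rewrite b0; ring.
    by apply: sm_sub => //; apply: sm_mul => //; exact: JJ.
  - by exists b; do !split => //; rewrite subrr; exact: prod_zero.
have [n [hN [hhN ehN]]] : exists n : nat, exists hN, Jh hN /\ (n.+1)%:R = b1 * hN.
  have [Nz [Nnz [s [hs es]]]] := @NZint F _ (mulf_neq0 b1nz h0nz) (JJ _ _ hb1 hh0).
  case: Nz Nnz es => [[|n]|n] Nnz es //.
  - exists n, (h0 * s); split; first exact: sm_mulr.
    by rewrite mulrA -es.
  - exists n, (- (h0 * s)); split; first by apply: sm_opp => //; exact: sm_mulr.
    by rewrite mulrN mulrA -es NegzE mulrNz opprK.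
have [K [K0 [z [hz ez]]]] := @Pow _ a n ha.
pose hD := hN * z.
have hhD : Jh hD by exact: sm_mulr.
pose E := a ^+ K; pose P := a ^+ K.-1; pose Q := (d - 1) ^+ K.
pose W := \sum_(k < K) (a * (d - 1)) ^+ k.
have eE : E = a * P by rewrite /E /P -exprS prednK.
have hE : E - E ^+ 2 = b1 * hD by rewrite /E -exprM muln2 -addnn ez ehN /hD mulrA.
have hW : (1 + a * (1 - d)) * W = 1 - E * Q.
  have := subrX1 (a * (d - 1)) K; rewrite -/W exprMn -/E -/Q => e1.
  have -> : 1 - E * Q = - (E * Q - 1) by ring.
  rewrite e1; ring.
pose g := a * d - b1 * c - 1.
pose ap := a - g * (1 - E).
pose v := P * E + (1 - E) * W.
pose h := hD * (-1 - g * P - Q + W * g) + c * ((1 - E) * W).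
have hdet : ap * v - b1 * h = 1 by exact: key_id.
have hgI : I g by [].
have hP : intF P by exact: intF_exp.
have hEi : intF E by exact: intF_exp.
have hQ : intF Q by apply: intF_exp; apply: intF_sub => //; exact: intF1.
have hWi : intF W by apply: intF_sum => k _; apply: intF_exp; apply: intF_mul => //;
  apply: intF_sub => //; exact: intF1.
have h1E : intF (1 - E) by apply: intF_sub => //; exact: intF1.
have hgR : intF g by exact: IR.
have hap : intF ap by apply: intF_sub => //; exact: intF_mul.
have hv : intF v by apply: intF_add; apply: intF_mul.
have hh : Jh h.
  apply: sm_add => //; first apply: sm_mulr => //.
    apply: intF_add; last exact: intF_mul.
    apply: intF_sub => //; apply: intF_sub; [exact/intF_opp/intF1 | exact: intF_mul].
  by apply: sm_mulr => //; exact: intF_mul.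
pose y := h * d - v * c.
have hy : Jh y by apply: sm_sub => //; [exact: sm_mulr | exact: sm_mul].
pose g' := ap * d - b1 * c - 1.
have hg' : I g'.
  have -> : g' = g * (1 - (1 - E) * d) by rewrite /g' /ap /g; ring.
  apply: sm_mulr => //; apply: intF_sub; [exact: intF1 | exact: intF_mul].
pose A : 'M[F]_2 := \matrix_(i < 2, j < 2)
  (if i == 0 then (if j == 0 then ap else b1) else (if j == 0 then h - ap * y else v - b1 * y)).
have A00 : A 0 0 = ap by rewrite mxE.
have A01 : A 0 1 = b1 by rewrite mxE.
have A10 : A 1 0 = h - ap * y by rewrite mxE.
have A11 : A 1 1 = v - b1 * y by rewrite mxE.
exists A; split.
  split; rewrite ?A00 ?A01 ?A10 ?A11 //.
  - rewrite det2 A00 A01 A10 A11 -hdet; ring.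
  - have -> : v - b1 * y = v - (b1 * h) * d + v * (b1 * c) by rewrite /y; ring.
    apply: intF_add; last by apply: intF_mul => //; exact: JJ.
    by apply: intF_sub => //; apply: intF_mul => //; exact: JJ.
  - by apply: sm_sub => //; exact: sm_mul.
split; rewrite ?A00 ?A01 ?A10 ?A11 //.
- have -> : ap - a = - (g * (1 - E)) by rewrite /ap; ring.
  by apply: sm_opp => //; exact: sm_mulr.
- have -> : v - b1 * y - d = - (v * g') + d * (ap * v - b1 * h - 1) by rewrite /y /g'; ring.
  rewrite hdet subrr mulr0 addr0; apply: sm_opp => //; exact: sm_mul.
- have -> : h - ap * y - c = (- g') * h + c * (ap * v - b1 * h - 1) by rewrite /y /g'; ring.
  rewrite hdet subrr mulr0 addr0; apply: prod_single => //; exact: sm_opp.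
Qed.
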